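(* Let $R$ be a commutative Artinian ring, $M$ a non-zero $R$-module, and $N\leq M$ an $H$-PS-hollow submodule such that $In(N)\leq L$ whenever $L$ is a submodule with $N\leq L\leq M$. Then $In(N)$ is $H$-PS-hollow.
   Context: An $R$-submodule $N\leq M$ is PS-hollow iff for every ideal $I\leq R$ and every submodule $L\leq M$: $N\subseteq IM+L$ implies $N\subseteq IM$ or $N\subseteq L$. For a PS-hollow $N\leq M$ put $A_N=\{I\leq R: N\subseteq IM\}$, $H_N$ the set of minimal elements of $A_N$, and $In(N)=\bigcap_{I\in H_N} IM$ ($=M$ if $H_N=\emptyset$). For a set $H$ of ideals, $N$ is $H$-PS-hollow iff $N$ is PS-hollow and $H_N=H$. *)

(* Defs.v *)
From HB Require Import structures.
From mathcomp Require Import all_boot all_algebra.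
Set Implicit Arguments.
Unset Strict Implicit.
Unset Printing Implicit Defensive.
Import GRing.Theory.
Local Open Scope ring_scope.

Section PSHollow.
Variables (R : comNzRingType) (M : lmodType R).

Definition incl {T : Type} (A B : T -> Prop) : Prop := forall x, A x -> B x.

Definition is_ideal (I : R -> Prop) : Prop :=
  [/\ I 0, (forall a b, I a -> I b -> I (a + b)) & (forall r a, I a -> I (r * a))].

Definition artinian_ring : Prop :=
  forall f : nat -> (R -> Prop),
    (forall n, is_ideal (f n)) ->
    (forall n, incl (f n.+1) (f n)) ->
    exists n, forall m, (n <= m)%N -> incl (f n) (f m).

Definition is_submodule (N : M -> Prop) : Prop :=
  [/\ N 0, (forall x y, N x -> N y -> N (x + y)) & (forall (r : R) x, N x -> N (r *: x))].

Definition IM (I : R -> Prop) : M -> Prop :=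
  fun x => forall S, is_submodule S -> (forall a m, I a -> S (a *: m)) -> S x.

Definition subm_sum (A B : M -> Prop) : M -> Prop :=
  fun x => exists a b, A a /\ B b /\ x = a + b.

Definition PS_hollow (N : M -> Prop) : Prop :=
  is_submodule N /\
  forall (I : R -> Prop) (L : M -> Prop), is_ideal I -> is_submodule L ->
    incl N (subm_sum (IM I) L) -> incl N (IM I) \/ incl N L.

Definition A_N (N : M -> Prop) (I : R -> Prop) : Prop :=
  is_ideal I /\ incl N (IM I).

Definition H_N (N : M -> Prop) (I : R -> Prop) : Prop :=
  A_N N I /\ forall J, A_N N J -> incl J I -> incl I J.

(* In(N) = intersection of IM over I in H_N (= M when H_N is empty) *)
Definition In_ (N : M -> Prop) : M -> Prop :=
  fun x => forall I, H_N N I -> IM I x.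

Definition H_PS_hollow (H : (R -> Prop) -> Prop) (N : M -> Prop) : Prop :=
  PS_hollow N /\ forall I, H_N N I <-> H I.

End PSHollow.

(* Main.v *)
Require Import Defs.
From HB Require Import structures.
From mathcomp Require Import all_boot all_algebra.
Local Open Scope ring_scope.

Lemma AN_eq (R : comNzRingType) (M : lmodType R) (A B : M -> Prop) J :
  incl A B -> incl B A -> A_N A J -> A_N B J.
Proof. move=> AB BA [h1 h2]; split=> // x /BA; exact: h2. Qed.

Lemma HN_eq (R : comNzRingType) (M : lmodType R) (A B : M -> Prop) I :
  incl A B -> incl B A -> H_N A I -> H_N B I.
Proof.
move=> AB BA [h1 h2]; split; first exact: AN_eq h1.
move=> J hJ; apply: h2; exact: AN_eq hJ.
Qed.

Lemma transport (R : comNzRingType) (M : lmodType R) H (A B : M -> Prop) :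
  incl A B -> incl B A -> H_PS_hollow H A -> H_PS_hollow H B.
Proof.
move=> AB BA [[[A0 AD AZ] PS] HH]; split; last first.
  move=> I; split=> h.
    apply (proj1 (HH I)); exact: HN_eq h.
  exact: (@HN_eq _ _ A B I AB BA (proj2 (HH I) h)).
split.
  split; first exact: AB.
  - move=> x y /BA hx /BA hy; exact: AB (AD _ _ hx hy).
  - move=> r x /BA hx; exact: AB (AZ _ _ hx).
move=> I L hI hL hs.
have [h|h] := PS I L hI hL (fun x hx => hs x (AB x hx)).
  by left=> x /BA; exact: h.
by right=> x /BA; exact: h.
Qed.

Lemma IM_sub (R : comNzRingType) (M : lmodType R) (I : R -> Prop) :
  is_submodule (IM (M:=M) I).
Proof.
split.
- by move=> S [S0 _ _] _.
- move=> x y hx hy S hS hg; case: (hS) => _ SD _; apply: SD; [exact: hx|exact: hy].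
- move=> r x hx S hS hg; case: (hS) => _ _ SZ; apply: SZ; exact: hx.
Qed.

Theorem lemma5p7 (R : comNzRingType) (M : lmodType R)
    (H : (R -> Prop) -> Prop) (N : M -> Prop) :
  artinian_ring R ->
  (exists m : M, m != 0) ->
  H_PS_hollow H N ->
  (forall L : M -> Prop, is_submodule L -> incl N L -> incl (In_ N) L) ->
  H_PS_hollow H (In_ N).
Proof.
move=> _ _ hN hL.
have NI : incl N (In_ N) by move=> x hx I [[_ hI] _]; exact: hI.
have IN : incl (In_ N) N by apply: hL; [case: hN => [[]] | ].
exact: transport NI IN hN.
Qed.
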